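(* For all integers $n,f$ with $1\le f\le n-2$, $\mathrm{Cons}(n,f)$ is $C$-reducible to the wait-free Consensus task $\mathrm{Cons}(n,n-1)$, but $\mathrm{Cons}(n,n-1)$ is not $C$-reducible to $\mathrm{Cons}(n,f)$.
   Context: Model: a finite set of processes runs an asynchronous algorithm communicating by reliable message passing with unbounded delays and speeds; processes fail only by crashing. Time is $\mathcal T=\mathbb N$; a failure pattern $F$ for $\Pi$ is a nondecreasing map $\mathcal T\to2^\Pi$, $Faulty(F)=\bigcup_tF(t)$. A task $T=(P,f)$ consists of a binary agreement problem $P$ (mapping $(F,\vec V)$, $\vec V\in\{0,1\}^\Pi$, to a nonempty $P(F,\vec V)\subseteq\{0,1\}$) and a resiliency degree $f$. An algorithm solves $T$ if in every run with $|Faulty(F)|\le f$ and initial values $\vec V$: every correct process eventually decides, decisions are irrevocable, no two processes decide differently, and decisions lie in $P(F,\vec V)$. Binary Consensus $\mathrm{Cons}(n,f)=(\mathrm{Cons}_{\Pi},f)$ on $\Pi=\{1,\dots,n\}$: $\mathrm{Cons}_\Pi(F,\vec V)=\{v\}$ if all entries of $\vec V$ equal $v$, and $\{0,1\}$ otherwise. Oracles: for $T=(P,f)$ on $\Pi$, $\mathcal O.T$ is a black box with consultants $\Pi$; its history is a sequence of successive consultations, in each of which every consultant may submit at most one query in $\{0,1\}$ and the oracle returns a common response $d$ with $d\in P(F,\vec V)$ for every $\vec V$ extending the partial query vector (the oracle may use the whole failure pattern, including future crashes), and every correct querier gets the response whenever at least $|\Pi|-f$ consultants query; $\mathcal O.T$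 is the most general such oracle. $T_1\le_C T_2$ means there is an algorithm solving $T_1$ whose processes, besides message passing, may consult the oracle $\mathcal O.T_2$. *)

(* Defs.v *)
From mathcomp Require Import all_boot.
Set Implicit Arguments. Unset Strict Implicit. Unset Printing Implicit Defensive.

Section Model.
Variable n : nat.
(* Processes Pi = {1,...,n} are represented by 'I_n. Time is nat. *)

Definition failure_pattern := nat -> {set 'I_n}.
Definition is_failure_pattern (F : failure_pattern) : Prop :=
  forall t t', t <= t' -> F t \subset F t'.
Definition faulty (F : failure_pattern) (p : 'I_n) : Prop := exists t, p \in F t.
Definition correct (F : failure_pattern) (p : 'I_n) : Prop := ~ faulty F p.
Definition at_most_faulty (F : failure_pattern) (f : nat) : Prop :=
  exists X : {set 'I_n}, #|X| <= f /\ forall p, faulty F p -> p \in X.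

(* A binary agreement problem: d \in P F V  is written  P F V d. *)
Definition agreement_problem := failure_pattern -> ('I_n -> bool) -> bool -> Prop.

Record task := Task { tprob : agreement_problem; tres : nat }.

(* Cons_Pi(F,V) = {v} if all entries of V equal v, {0,1} otherwise. *)
Definition Cons_prob : agreement_problem :=
  fun F V d => forall v : bool, (forall i, V i = v) -> d = v.
Definition Consensus (f : nat) : task := Task Cons_prob f.

(* What a process receives in one step: nothing, a message (with its
   sender), or the response d of the oracle to consultation k. *)
Inductive event (M : Type) :=
  | EvNone
  | EvMsg of 'I_n & M
  | EvResp of nat & bool.

(* A (deterministic) algorithm that may consult an oracle: each step maps the
   current local state and the received event to a new state, a finite list
   of messages (destination, content) to send, and optionally a query
   (k, b): submit query b to consultation number k. *)
Record algorithm := Algorithm {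
  St : Type;
  Msg : Type;
  init : 'I_n -> bool -> St;
  step : 'I_n -> St -> event Msg -> St * seq ('I_n * Msg) * option (nat * bool);
  decision : St -> option bool }.

(* A run: who steps at each time, what it receives, the configurations,
   what is sent/queried, which send each received message comes from,
   and for each consultation k the oracle's (time of response, common
   response). *)
Record run (A : algorithm) := Run {
  sched : nat -> option 'I_n;
  ev : nat -> event (Msg A);
  cfg : nat -> 'I_n -> St A;
  sent : nat -> seq ('I_n * Msg A);
  qry : nat -> option (nat * bool);
  msrc : nat -> nat * nat;
  resp : nat -> option (nat * bool) }.

Variable A : algorithm.

(* p submits (its unique, i.e. first) query b to consultation k at time t *)
Definition first_query (r : run A) (p : 'I_n) (k t : nat) (b : bool) : Prop :=
  sched r t = Some p /\ qry r t = Some (k, b) /\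
  forall t0, t0 < t -> sched r t0 = Some p -> forall b0, qry r t0 <> Some (k, b0).

Definition queried_before (r : run A) (p : 'I_n) (k tau : nat) (b : bool) : Prop :=
  exists t, t < tau /\ first_query r p k t b.

Definition admissible (T2 : task) (F : failure_pattern) (V : 'I_n -> bool)
    (r : run A) : Prop :=
  (forall p, cfg r 0 p = @init A p (V p)) /\
  (forall t, match sched r t with
     | None => (forall p, cfg r t.+1 p = cfg r t p) /\ sent r t = [::] /\
               qry r t = None /\ ev r t = @EvNone _
     | Some p =>
        let: (s', ms, q) := @step A p (cfg r t p) (ev r t) in
        p \notin F t /\ cfg r t.+1 p = s' /\
        (forall p', p' != p -> cfg r t.+1 p' = cfg r t p') /\
        sent r t = ms /\ qry r t = q
     end) /\
  (forall t p q m, sched r t = Some p -> ev r t = EvMsg q m ->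
     (msrc r t).1 < t /\ sched r (msrc r t).1 = Some q /\
     onth (sent r (msrc r t).1) (msrc r t).2 = Some (p, m)) /\
  (* no duplication *)
  (forall t1 t2 p1 p2 q1 q2 m1 m2,
     sched r t1 = Some p1 -> ev r t1 = EvMsg q1 m1 ->
     sched r t2 = Some p2 -> ev r t2 = EvMsg q2 m2 ->
     msrc r t1 = msrc r t2 -> t1 = t2) /\
  (forall t' q i p m, sched r t' = Some q -> onth (sent r t') i = Some (p, m) ->
     correct F p ->
     exists t, sched r t = Some p /\ ev r t = EvMsg q m /\ msrc r t = (t', i)) /\
  (* oracle safety: the common response d lies in P(F,V') for every V'
     extending the partial query vector at response time *)
  (forall k tau d, resp r k = Some (tau, d) ->
     forall V' : 'I_n -> bool,
       (forall p b, queried_before r p k tau b -> V' p = b) -> tprob T2 F V' d) /\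
  (forall t p k d, sched r t = Some p -> ev r t = EvResp _ k d ->
     exists tau b, resp r k = Some (tau, d) /\ tau <= t /\ queried_before r p k tau b) /\
  (forall t1 t2 p k d1 d2,
     sched r t1 = Some p -> ev r t1 = EvResp _ k d1 ->
     sched r t2 = Some p -> ev r t2 = EvResp _ k d2 -> t1 = t2) /\
  (* oracle liveness: if at least |Pi| - f consultants query consultation k,
     every correct querier gets the response *)
  (forall k (Q : {set 'I_n}), n - tres T2 <= #|Q| ->
     (forall p, p \in Q -> exists t b, first_query r p k t b) ->
     exists tau d, resp r k = Some (tau, d) /\
       forall p t b, correct F p -> first_query r p k t b ->
         exists t', sched r t' = Some p /\ ev r t' = EvResp _ k d) /\
  (forall p, correct F p -> forall t, exists t', t <= t' /\ sched r t' = Some p).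

Definition solves_with (T1 T2 : task) : Prop :=
  forall (F : failure_pattern) (V : 'I_n -> bool) (r : run A),
    is_failure_pattern F -> at_most_faulty F (tres T1) -> admissible T2 F V r ->
    [/\
        (forall p, correct F p -> exists t v, @decision A (cfg r t p) = Some v),
        (forall p t t' v, t <= t' -> @decision A (cfg r t p) = Some v ->
           @decision A (cfg r t' p) = Some v),
        (forall p q t t' v w, @decision A (cfg r t p) = Some v ->
           @decision A (cfg r t' q) = Some w -> v = w) &
        (forall p t v, @decision A (cfg r t p) = Some v -> tprob T1 F V v)].

End Model.

Definition C_reducible (n : nat) (T1 T2 : task n) : Prop :=
  exists A : algorithm n, solves_with A T1 T2.

(* Main.v *)
Require Import Defs.
From mathcomp Require Import all_boot zify.
From Stdlib Require Import ClassicalEpsilon.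
Set Implicit Arguments. Unset Strict Implicit. Unset Printing Implicit Defensive.

Section StepFacts.
Variables (n : nat) (A : algorithm n) (T2 : task n) (F : failure_pattern n) (V : 'I_n -> bool) (r : run A).
Hypothesis adm : admissible T2 F V r.

Lemma adm_step t p : sched r t = Some p ->
  [/\ cfg r t.+1 p = (step p (cfg r t p) (ev r t)).1.1,
      (forall p', p' != p -> cfg r t.+1 p' = cfg r t p'),
      sent r t = (step p (cfg r t p) (ev r t)).1.2 &
      qry r t = (step p (cfg r t p) (ev r t)).2].
Proof.
case: adm => _ [H _] E; move: (H t); rewrite E.
by case: (step _ _ _) => [[s ms] qo] [_ [? [? [? ?]]]]; split.
Qed.

Lemma adm_none t : sched r t = None -> forall p, cfg r t.+1 p = cfg r t p.
Proof. by case: adm => _ [H _] E; move: (H t); rewrite E => [[]]. Qed.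

Lemma adm_none_qry t : sched r t = None -> qry r t = None.
Proof. by case: adm => _ [H _] E; move: (H t); rewrite E => [[? [? []]]]. Qed.

Lemma adm_cfg_frame t p : sched r t <> Some p -> cfg r t.+1 p = cfg r t p.
Proof.
case E: (sched r t) => [p'|] H; last exact: adm_none.
have [_ -> //] := adm_step E. by apply/eqP => h; apply: H; rewrite h.
Qed.
End StepFacts.

Section Positive.
Variable n : nat.

Definition pstep (p : 'I_n) (s : bool * option bool) (e : event n unit) :
   (bool * option bool) * seq ('I_n * unit) * option (nat * bool) :=
  (match e with
   | EvResp 0 d => (s.1, if s.2 is Some x then Some x else Some d)
   | _ => s end, [::], Some (0, s.1)).

Definition palg : algorithm n :=
  @Algorithm n (bool * option bool)%type unit (fun _ b => (b, None)) pstep snd.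

Variables (f : nat) (F : failure_pattern n) (V : 'I_n -> bool) (r : run palg).
Hypothesis adm : admissible (Consensus n (n - 1)) F V r.

Lemma inp t p : (cfg r t p).1 = V p.
Proof.
elim: t => [|t IH]; first by case: adm => ->.
case E: (sched r t) => [p'|]; last by rewrite (adm_none adm E).
have [h1 h2 _ _] := adm_step adm E.
case: (eqVneq p p') => [e|ne]; last by rewrite h2.
subst p'.
by rewrite h1 /=; case: (ev r t) => [|? ?|[|k] d].
Qed.

Lemma qry_ok t p : sched r t = Some p -> qry r t = Some (0, V p).
Proof. by move=> E; have [_ _ _ ->] := adm_step adm E; rewrite /= inp. Qed.

Lemma dec_src t p v : (cfg r t p).2 = Some v ->
  exists t0, sched r t0 = Some p /\ ev r t0 = EvResp _ _ 0 v.
Proof.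
elim: t => [|t IH]; first by case: adm => ->.
case E: (sched r t) => [p'|]; last by rewrite (adm_none adm E); apply: IH.
have [h1 h2 _ _] := adm_step adm E.
case: (eqVneq p p') => [e|ne]; last by rewrite h2 //; apply: IH.
subst p'; rewrite h1 /=.
case Ee: (ev r t) => [|? ?|[|k] d] /=; try exact: IH.
case Es: (cfg r t p).2 => [x|] /=; first by move=> h; apply: IH; rewrite Es.
by case=> <-; exists t.
Qed.

Lemma dec_keep t t' p v : t <= t' -> (cfg r t p).2 = Some v -> (cfg r t' p).2 = Some v.
Proof.
move=> /subnK <-; elim: (t' - t) => [|k IH] //= H.
rewrite addSn; case E: (sched r (k + t)) => [p'|]; last by rewrite (adm_none adm E); apply: IH.
have [h1 h2 _ _] := adm_step adm E.
case: (eqVneq p p') => [e|ne]; last by rewrite h2 //; apply: IH.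
subst p'; rewrite h1 /=.
by case: (ev r (k + t)) => [|? ?|[|k'] d] /=; rewrite ?(IH H).
Qed.

Lemma resp_val t p v : sched r t = Some p -> ev r t = EvResp _ _ 0 v ->
  exists tau, resp r 0 = Some (tau, v).
Proof.
case: adm => [Hi [Hs [Hm [Hd [Hr [Hsafe [Hrd [Ho [Hl Hf]]]]]]]]] E1 E2.
by have [tau [b [-> _]]] := Hrd _ _ _ _ E1 E2; exists tau.
Qed.

Lemma dec_resp t p v : (cfg r t p).2 = Some v -> exists tau, resp r 0 = Some (tau, v).
Proof. by move=> /dec_src [t0 [E1 E2]]; apply: resp_val E1 E2. Qed.

Lemma validity t p v : (cfg r t p).2 = Some v -> Cons_prob F V v.
Proof.
case: adm => [Hi [Hs [Hm [Hd [Hr [Hsafe [Hrd [Ho [Hl Hf]]]]]]]]].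
move=> /dec_resp [tau Er].
apply: (Hsafe _ _ _ Er V) => p' b [t0 [_ [E1 [E2 _]]]].
by move: E2; rewrite (qry_ok E1) => [[]].
Qed.

Lemma termination p : correct F p -> exists t v, (cfg r t p).2 = Some v.
Proof.
case: adm => [Hi [Hs [Hm [Hd [Hr [Hsafe [Hrd [Ho [Hl Hf]]]]]]]]] cp.
have ex : exists t, sched r t == Some p by have [t [_ h]] := Hf p cp 0; exists t; rewrite h.
set t0 := ex_minn ex.
have fq : first_query r p 0 t0 (V p).
  rewrite /t0; case: ex_minnP => m /eqP Em Hmin; split=> //; split; first exact: qry_ok.
  by move=> t1 lt1 E1; have := Hmin _ (introT eqP E1); rewrite leqNgt lt1.
have [||tau [d [_ Hd']]] := Hl 0 [set p].
- by rewrite cards1 /=; lia.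
- by move=> x; rewrite inE => /eqP ->; exists t0, (V p).
have [t' [E1 E2]] := Hd' _ _ _ cp fq.
exists t'.+1; have [h1 _ _ _] := adm_step adm E1.
rewrite h1 /= E2 /=; case: (cfg r t' p).2 => [x|]; by eexists.
Qed.
End Positive.

Lemma positive n f : C_reducible (Consensus n f) (Consensus n (n-1)).
Proof.
exists (palg n) => F V r _ _ adm; split.
- exact: termination adm.
- move=> p t t' v; exact: (dec_keep adm).
- move=> p q t t' v w /(dec_resp adm) [tau E1] /(dec_resp adm) [tau' E2]; congruence.
- move=> p t v; exact: (validity adm).
Qed.

Section Sim.
Variables (n : nat) (A : algorithm n) (p q : 'I_n) (sc : nat -> option 'I_n) (R : nat) (V : 'I_n -> bool).
Hypothesis pq : p != q.

Inductive item := IMsg of nat & nat & 'I_n & Msg A | IResp of nat & bool.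
Record sst := SS { cf : 'I_n -> St A; qu : 'I_n -> seq item; hd : seq item; ks : seq nat }.

Definition release (s : sst) :=
  SS (cf s) (fun y => if y == q then qu s y ++ hd s else qu s y) [::] (ks s).
Definition pre t s := if t == R then release s else s.
Definition ev_of (l : seq item) : event n (Msg A) :=
  if l is it :: _ then
    match it with IMsg _ _ s m => EvMsg s m | IResp k b => EvResp _ _ k b end
  else @EvNone n (Msg A).
Definition src_of (l : seq item) := if l is IMsg t i _ _ :: _ then (t, i) else (0, 0).
Fixpoint mk (t i : nat) (x : 'I_n) (P : pred 'I_n) (ms : seq ('I_n * Msg A)) : seq item :=
  if ms is (d, m) :: ms' then
    (if P d then IMsg t i x m :: mk t i.+1 x P ms' else mk t i.+1 x P ms')
  else [::].
Definition rsp (x : 'I_n) (qo : option (nat * bool)) (K : seq nat) : seq item :=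
  if x == q then (if qo is Some (k, b) then (if k \in K then [::] else [:: IResp k b]) else [::])
  else [::].
Definition ksu (x : 'I_n) (qo : option (nat * bool)) (K : seq nat) : seq nat :=
  if x == q then (if qo is Some (k, _) then (if k \in K then K else rcons K k) else K) else K.
Definition post t x s :=
  let: (s', ms, qo) := @step n A x (cf s x) (ev_of (qu s x)) in
  SS (fun y => if y == x then s' else cf s y)
     (fun y => if y == x then behead (qu s x) ++ mk t 0 x (pred1 x) ms ++ rsp x qo (ks s)
               else qu s y)
     (hd s ++ mk t 0 x (fun d => (x == p) && (d == q)) ms)
     (ksu x qo (ks s)).
Fixpoint sim t := if t is t'.+1 then
    (match sc t' with Some x => post t' x (pre t' (sim t')) | None => pre t' (sim t') end)
  else SS (fun y => @init n A y (V y)) (fun _ => [::]) [::] [::].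

Definition Pt t := pre t (sim t).
Definition evr t := if sc t is Some x then ev_of (qu (Pt t) x) else @EvNone n (Msg A).
Definition stp t x := @step n A x (cf (sim t) x) (ev_of (qu (Pt t) x)).
Definition sentr t := if sc t is Some x then (stp t x).1.2 else [::].
Definition qryr t := if sc t is Some x then (stp t x).2 else None.
Definition msrcr t := if sc t is Some x then src_of (qu (Pt t) x) else (0, 0).
Definition r0 : run A := Run sc evr (fun t => cf (sim t)) sentr qryr msrcr (fun _ => None).
Definition respr (k : nat) : option (nat * bool) :=
  match excluded_middle_informative (exists tb : nat * bool, first_query r0 q k tb.1 tb.2) with
  | left H => let tb := proj1_sig (constructive_indefinite_description _ H) in Some (tb.1.+1, tb.2)
  | right _ => None end.
Definition rr : run A := Run sc evr (fun t => cf (sim t)) sentr qryr msrcr respr.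

Lemma cf_pre t s : cf (pre t s) = cf s.
Proof. by rewrite /pre; case: (t == R). Qed.
Lemma ks_pre t s : ks (pre t s) = ks s.
Proof. by rewrite /pre; case: (t == R). Qed.

Lemma fq_uniq k t1 t2 b1 b2 : first_query r0 q k t1 b1 -> first_query r0 q k t2 b2 -> t1 = t2 /\ b1 = b2.
Proof.
move=> [E1 [Q1 H1]] [E2 [Q2 H2]].
have tt : t1 = t2.
  case: (ltngtP t1 t2) => // lt; [by case: (H2 _ lt E1 b1) | by case: (H1 _ lt E2 b2)].
by subst t2; split => //; move: Q1; rewrite Q2 => [[]].
Qed.

Lemma respr_spec k t b : first_query r0 q k t b -> respr k = Some (t.+1, b).
Proof.
move=> H; rewrite /respr; case: excluded_middle_informative => [H'|nH]; last first.
  by case: nH; exists (t, b).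
case: constructive_indefinite_description => [[t' b']] /= /(fq_uniq H) [-> ->] //.
Qed.

Lemma respr_some k tau d : respr k = Some (tau, d) -> exists t, first_query r0 q k t d /\ tau = t.+1.
Proof.
rewrite /respr; case: excluded_middle_informative => [H'|nH] //.
case: constructive_indefinite_description => [[t' b']] /= H [<- <-]; by exists t'.
Qed.

Definition pend x s := qu s x ++ (if x == q then hd s else [::]).
Lemma pend_pre t s x : pend x (pre t s) = pend x s.
Proof. rewrite /pend /pre; case: (t == R) => //=; case: (x == q) => //; by rewrite cats0. Qed.

Definition mid (it : item) := if it is IMsg t i _ _ then Some (t, i) else None.
Definition ids (l : seq item) := pmap mid l.
Definition rkey (it : item) := if it is IResp k _ then Some k else None.
Definition rks (l : seq item) := pmap rkey l.

Lemma ids_cat l1 l2 : ids (l1 ++ l2) = ids l1 ++ ids l2.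
Proof. exact: pmap_cat. Qed.
Lemma rks_cat l1 l2 : rks (l1 ++ l2) = rks l1 ++ rks l2.
Proof. exact: pmap_cat. Qed.

Lemma mk_in t i x (P : pred (ordinal n)) ms it : List.In it (mk t i x P ms) ->
  exists j m d, it = IMsg t (i + j) x m /\ onth ms j = Some (d, m) /\ P d.
Proof.
elim: ms i => [|[d m] ms IH] i //=.
case: ifP => Pd /=.
  case=> [<-|/IH [j [m' [d' [-> [h1 h2]]]]]]; first by exists 0, m, d; rewrite addn0.
  by exists j.+1, m', d'; rewrite addnS.
move=> /IH [j [m' [d' [-> [h1 h2]]]]]; by exists j.+1, m', d'; rewrite addnS.
Qed.

Lemma mk_complete t i x (P : pred (ordinal n)) ms j d m : onth ms j = Some (d, m) -> P d ->
  List.In (IMsg t (i + j) x m) (mk t i x P ms).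
Proof.
elim: ms i j => [|[d' m'] ms IH] i [|j] //=.
  by case=> <- <- ->; rewrite addn0; left.
move=> /IH h /h; rewrite -addSnnS => {}h.
case: ifP => _ //=; by right.
Qed.

Lemma mk_rks t i x (P : pred (ordinal n)) ms : rks (mk t i x P ms) = [::].
Proof. elim: ms i => [|[d m] ms IH] i //=; case: (P d) => //=; exact: IH. Qed.

Lemma mk_ids t i x (P : pred (ordinal n)) ms : (forall id, id \in ids (mk t i x P ms) -> id.1 = t /\ i <= id.2) /\
   uniq (ids (mk t i x P ms)).
Proof.
elim: ms i => [|[d m] ms IH] i //=.
have [h1 h2] := IH i.+1.
case: ifP => _ //=; last by split => // id /h1 [-> /ltnW].
split.
  by move=> id; rewrite inE => /orP [/eqP -> //|/h1 [-> /ltnW]].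
rewrite h2 andbT; apply/negP => /h1 [_] /=; by rewrite ltnn.
Qed.

Lemma mk_false t i x ms : mk t i x (fun _ => false) ms = [::].
Proof. by elim: ms i => [|[d m] ms IH] i //=. Qed.

Lemma in_ids l id : id \in ids l -> exists t i s m, List.In (IMsg t i s m) l /\ id = (t, i).
Proof.
elim: l => [|[t i s m|k b] l IH] //=; rewrite /ids /=.
  rewrite inE => /orP [/eqP ->|/IH [t' [i' [s' [m' [h ->]]]]]]; first by exists t, i, s, m; split; [left|].
  by exists t', i', s', m'; split; [right|].
by move=> /IH [t' [i' [s' [m' [h ->]]]]]; exists t', i', s', m'; split; [right|].
Qed.

Lemma in_rks l k : k \in rks l -> exists b, List.In (IResp k b) l.
Proof.
elim: l => [|[t i s m|k' b] l IH] //=; rewrite /rks /=.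
  by move=> /IH [b h]; exists b; right.
rewrite inE => /orP [/eqP ->|/IH [b' h]]; first by exists b; left.
by exists b'; right.
Qed.

Lemma ids_in l t i s m : List.In (IMsg t i s m) l -> (t, i) \in ids l.
Proof.
elim: l => [|it l IH] //= [->|/IH h]; rewrite /ids /=; first by rewrite inE eqxx.
by case: it => //= *; rewrite inE h orbT.
Qed.

Lemma rks_in l k b : List.In (IResp k b) l -> k \in rks l.
Proof.
elim: l => [|it l IH] //= [->|/IH h]; rewrite /rks /=; first by rewrite inE eqxx.
by case: it => //= *; rewrite inE h orbT.
Qed.

Lemma mk_false' t i x (P : pred (ordinal n)) ms : (forall d, P d = false) -> mk t i x P ms = [::].
Proof. by move=> H; elim: ms i => [|[d m] ms IH] i //=; rewrite H. Qed.

Lemma sim_some t y : sc t = Some y -> sim t.+1 =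
  SS (fun z => if z == y then (stp t y).1.1 else cf (sim t) z)
     (fun z => if z == y then behead (qu (Pt t) y) ++ mk t 0 y (pred1 y) (stp t y).1.2 ++
                              rsp y (stp t y).2 (ks (sim t)) else qu (Pt t) z)
     (hd (Pt t) ++ mk t 0 y (fun d => (y == p) && (d == q)) (stp t y).1.2)
     (ksu y (stp t y).2 (ks (sim t))).
Proof.
move=> E; rewrite /= E /post /stp -/(Pt t) /Pt cf_pre ks_pre.
by case: (step _ _ _) => [[s' ms] qo].
Qed.

Lemma sim_none t : sc t = None -> sim t.+1 = Pt t.
Proof. by move=> E; rewrite /= E. Qed.

Definition new_ok t y x it :=
  match it with
  | IMsg t' i s m => t' = t /\ s = y /\ onth (stp t y).1.2 i = Some (x, m)
  | IResp k b => x = q /\ y = q /\ (stp t y).2 = Some (k, b) /\ k \notin ks (sim t)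
  end.

Lemma rsp_props y qo K : uniq (ids (rsp y qo K)) /\ uniq (rks (rsp y qo K)).
Proof. rewrite /rsp; case: (y == q) => //; case: qo => [[k b]|] //; by case: (k \in K). Qed.

Lemma rsp_ids y qo K : ids (rsp y qo K) = [::].
Proof. rewrite /rsp; case: (y == q) => //; case: qo => [[k b]|] //; by case: (k \in K). Qed.

Lemma step_struct t y x : sc t = Some y -> exists u v w,
  [/\ pend x (Pt t) = (if x == y then take 1 (qu (Pt t) x) else [::]) ++ u ++ w,
      pend x (sim t.+1) = u ++ v ++ w,
      (forall it, List.In it v -> new_ok t y x it),
      uniq (ids v) & uniq (rks v)].
Proof.
move=> E; rewrite (sim_some E) /pend /=.
set ms := (stp t y).1.2; set qo := (stp t y).2.
have mkS_ok it : List.In it (mk t 0 y (pred1 y) ms) -> new_ok t y y it.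
  by move=> /mk_in [j [m [d [-> [h /eqP e]]]]]; subst d.
have rsp_ok it : List.In it (rsp y qo (ks (sim t))) -> new_ok t y y it.
  rewrite /rsp; case: eqP => // ey.
  case Eq: qo => [[k b]|] //; case: ifP => //= kn [] // <- /=.
  by rewrite kn -Eq.
have [mi mu] := mk_ids t 0 y (pred1 y) ms.
have [ri ru] := rsp_props y qo (ks (sim t)).
case: (eqVneq x y) => [exy|nxy].
  subst x.
  exists (behead (qu (Pt t) y)), (mk t 0 y (pred1 y) ms ++ rsp y qo (ks (sim t))).
  exists (if y == q then hd (Pt t) ++ mk t 0 y (fun d => (y == p) && (d == q)) ms else [::]).
  split.
  - rewrite catA -drop1 cat_take_drop; case: eqP => // ey; subst y.
    by rewrite (@mk_false' _ _ _ (fun d => _)) ?cats0 // => d; rewrite eq_sym (negbTE pq).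
  - by rewrite !catA.
  - move=> it H; case: (List.in_app_or _ _ _ H) => h; [exact: mkS_ok | exact: rsp_ok].
  - by rewrite ids_cat rsp_ids cats0.
  - by rewrite rks_cat mk_rks.
idtac.
case: (eqVneq x q) => [exq|nxq].
  subst x; exists (qu (Pt t) q ++ hd (Pt t)), (mk t 0 y (fun d => (y == p) && (d == q)) ms), [::].
  split.
  - by rewrite cats0.
  - by rewrite !cats0 catA.
  - by move=> it /mk_in [j [m [d [-> [h /andP [_ /eqP e]]]]]]; subst d.
  - by have [] := mk_ids t 0 y (fun d => (y == p) && (d == q)) ms.
  - by rewrite mk_rks.
exists (qu (Pt t) x), [::], [::]; split => //.
Qed.

Definition item_ok t x it :=
  match it with
  | IMsg t' i s m => t' < t /\ sc t' = Some s /\ onth (sentr t') i = Some (x, m)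
  | IResp k b => x = q /\ exists tk, tk < t /\ first_query r0 q k tk b
  end.
Definition dmsg t1 id := (exists s m, evr t1 = EvMsg s m) /\ msrcr t1 = id.
Definition dresp t1 x k := sc t1 = Some x /\ exists b, evr t1 = EvResp _ _ k b.
Definition queried k t0 := sc t0 = Some q /\ exists b, qryr t0 = Some (k, b).

Record Inv t : Prop := {
 Iok : forall x it, List.In it (pend x (sim t)) -> item_ok t x it;
 Iuid : forall x, uniq (ids (pend x (sim t)));
 Iurk : forall x, uniq (rks (pend x (sim t)));
 Ifid : forall x id t1, id \in ids (pend x (sim t)) -> t1 < t -> ~ dmsg t1 id;
 Ifrk : forall x k t1, k \in rks (pend x (sim t)) -> t1 < t -> ~ dresp t1 x k;
 Iks : forall k, k \in ks (sim t) <-> exists t0, t0 < t /\ queried k t0;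
 Irk : forall k, k \in rks (pend q (sim t)) -> k \in ks (sim t);
 Ihr : forall t1 k, t1 < t -> dresp t1 q k -> k \in ks (sim t);
 Ihm : forall t1 id, t1 < t -> dmsg t1 id -> id.1 < t1 }.

Lemma item_ok_S t x it : item_ok t x it -> item_ok t.+1 x it.
Proof.
case: it => [t' i s m|k b] /=; first by case=> h ?; split => //; exact: ltnW.
by case=> -> [tk [h ?]]; split => //; exists tk; split => //; exact: ltnW.
Qed.

Lemma in_Pt t x it : List.In it (qu (Pt t) x) -> List.In it (pend x (sim t)).
Proof. by rewrite -(pend_pre t (sim t) x) /pend -/(Pt t) => h; apply: List.in_or_app; left. Qed.

Lemma dmsg_head t id : dmsg t id -> exists y t' i s m l,
  sc t = Some y /\ qu (Pt t) y = IMsg t' i s m :: l /\ id = (t', i).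
Proof.
rewrite /dmsg /evr /msrcr; case Es: (sc t) => [y|]; last by case=> [[? [?]]].
case Eq: (qu (Pt t) y) => [|[t' i s m|k b] l] /=; try by case=> [[? [?]]].
by case=> _ <-; exists y, t', i, s, m, l.
Qed.

Lemma dresp_head t x k : dresp t x k -> exists b l, qu (Pt t) x = IResp k b :: l.
Proof.
rewrite /dresp /evr; case=> -> [b]; case Eq: (qu (Pt t) x) => [|[t' i s m|k' b'] l] //=.
by case=> -> ->; exists b, l.
Qed.

Lemma ksu_sub y qo K k : k \in K -> k \in ksu y qo K.
Proof.
rewrite /ksu => h; case: (y == q) => //; case: qo => [[k' b]|] //.
by case: ifP => // _; rewrite mem_rcons inE h orbT.
Qed.

Lemma ksu_mem y qo K k : k \in ksu y qo K -> k \in K \/ (y = q /\ exists b, qo = Some (k, b)).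
Proof.
rewrite /ksu; case: eqP => [->|_]; last by left.
case: qo => [[k' b]|]; last by left.
case: ifP => _; first by left.
rewrite mem_rcons inE => /orP [/eqP ->|]; [right; split => //; by exists b | by left].
Qed.

Lemma ksu_new y qo K k b : y = q -> qo = Some (k, b) -> k \in ksu y qo K.
Proof. move=> -> ->; rewrite /ksu eqxx; case: ifP => // _; by rewrite mem_rcons inE eqxx. Qed.

Lemma ltS_case t1 t : t1 < t.+1 -> t1 = t \/ t1 < t.
Proof. by rewrite ltnS leq_eqVlt => /orP [/eqP ->|]; [left|right]. Qed.

Lemma Inv0 : Inv 0.
Proof.
have Ep x : pend x (sim 0) = [::] by rewrite /pend /=; case: (x == q).
constructor => [x it|x|x|x id t1|x k t1|k|k|t1 k|t1 id]; rewrite ?Ep //.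
by split => // [[t0 []]].
Qed.

Lemma pend_sim t x : pend x (sim t) = pend x (Pt t).
Proof. by rewrite /Pt pend_pre. Qed.

Lemma new_item_ok t y x it : Inv t -> sc t = Some y -> new_ok t y x it -> item_ok t.+1 x it.
Proof.
move=> I E; case: it => [t' i s m|k b] /=.
  by case=> -> [-> h]; split => //; split => //; rewrite /sentr E.
case=> xq [yq [hq kn]]; split => //; exists t; split => //.
subst y; split => //; split; first by rewrite /= /qryr E.
move=> t0 lt0 E0 b0 hq0; move/negP: kn; apply; apply/(Iks I); exists t0; split => //.
by split => //; exists b0.
Qed.

Lemma InvS t : Inv t -> Inv t.+1.
Proof.
move=> I.
case E: (sc t) => [y|]; last first.
  have Es : sim t.+1 = Pt t := sim_none E.
  have Ep x : pend x (sim t.+1) = pend x (sim t) by rewrite Es pend_sim.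
  have Ek : ks (sim t.+1) = ks (sim t) by rewrite Es /Pt ks_pre.
  have nm id : ~ dmsg t id by rewrite /dmsg /evr E => [[[? [?]]]].
  have nr x k : ~ dresp t x k by rewrite /dresp E => [[]].
  constructor.
  - by move=> x it; rewrite Ep => h; apply: item_ok_S; exact: (Iok I h).
  - by move=> x; rewrite Ep; exact: (Iuid I).
  - by move=> x; rewrite Ep; exact: (Iurk I).
  - by move=> x id t1; rewrite Ep => h /ltS_case [->|]; [apply: nm | apply: (Ifid I) h].
  - by move=> x k t1; rewrite Ep => h /ltS_case [->|]; [apply: nr | apply: (Ifrk I) h].
  - move=> k; rewrite Ek (Iks I); split => [[t0 [h1 h2]]|[t0 [/ltS_case [e|h1] h2]]].
    + by exists t0; split => //; apply: ltnW.
    + by subst t0; move: h2; rewrite /queried E => [[]].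
    + by exists t0.
  - by move=> k; rewrite Ep Ek; exact: (Irk I).
  - by move=> t1 k; rewrite Ek => /ltS_case [->|h]; [move/nr | apply: (Ihr I)].
  - by move=> t1 id /ltS_case [->|h]; [move/nm | apply: (Ihm I)].
set qo := (stp t y).2.
have Ek : ks (sim t.+1) = ksu y qo (ks (sim t)) by rewrite (sim_some E).
have ksS k : k \in ks (sim t) -> k \in ks (sim t.+1) by rewrite Ek; apply: ksu_sub.
have headok it l : qu (Pt t) y = it :: l -> item_ok t y it.
  by move=> Eq; apply: (Iok I); apply: in_Pt; rewrite Eq; left.
have old_in x u w it : pend x (sim t) = (if x == y then take 1 (qu (Pt t) x) else [::]) ++ u ++ w ->
   List.In it (u ++ w) -> List.In it (pend x (sim t)).
  by move=> ->; move=> h; apply: List.in_or_app; right.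
have old_ids x u w : pend x (sim t) = (if x == y then take 1 (qu (Pt t) x) else [::]) ++ u ++ w ->
   uniq (ids (u ++ w)) /\ uniq (rks (u ++ w)).
  move=> e; have := Iuid I x; have := Iurk I x; rewrite e ids_cat rks_cat !cat_uniq.
  by move=> /and3P [_ _ ->] /and3P [_ _ ->].
constructor.
- move=> x it; have [u [v [w [e1 e2 hv uv ur]]]] := step_struct x E.
  rewrite -pend_sim in e1; rewrite e2 => H; case: (List.in_app_or _ _ _ H) => [h|H']; last case: (List.in_app_or _ _ _ H') => h.
  + by apply: item_ok_S; apply: (Iok I); apply: (old_in x u w) => //; apply: List.in_or_app; left.
  + exact: (new_item_ok I E (hv _ h)).
  + by apply: item_ok_S; apply: (Iok I); apply: (old_in x u w) => //; apply: List.in_or_app; right.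
- move=> x; have [u [v [w [e1 e2 hv uv ur]]]] := step_struct x E.
  rewrite -pend_sim in e1; rewrite e2.
  have [ou _] := old_ids x u w e1.
  rewrite !ids_cat uniq_catCA -ids_cat cat_uniq uv ou /= andbT.
  apply/hasPn => id /in_ids [t' [i [s [m [hin ->]]]]].
  apply/negP => /in_ids [t'' [i' [s' [m' [hin' [e _]]]]]].
  have := hv _ hin' => /= [[e' _]]; subst t'' t'.
  have := Iok I (old_in x u w _ e1 hin) => /= [[]]; by rewrite ltnn.
- move=> x; have [u [v [w [e1 e2 hv uv ur]]]] := step_struct x E.
  rewrite -pend_sim in e1; rewrite e2.
  have [_ ou] := old_ids x u w e1.
  rewrite !rks_cat uniq_catCA -rks_cat cat_uniq ur ou /= andbT.
  apply/hasPn => k /in_rks [b' hin'].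
  apply/negP => /in_rks [b hin].
  have := hv _ hin => /= [[xq [yq [_ kn]]]].
  have hp := old_in x u w _ e1 hin'.
  move: kn; rewrite (Irk I) //; subst x; exact: rks_in hp.
- move=> x id t1; have [u [v [w [e1 e2 hv uv ur]]]] := step_struct x E.
  rewrite -pend_sim in e1; rewrite e2 !ids_cat !mem_cat.
  have old : id \in ids (u ++ w) -> t1 < t.+1 -> ~ dmsg t1 id.
    move=> hid /ltS_case [->|lt]; last first.
      by apply: (@Ifid t I x id t1 _ lt); rewrite e1 !ids_cat !mem_cat -mem_cat -ids_cat hid orbT.
    move=> dm; have [y' [t2 [i2 [s2 [m2 [l [E' [Eq e3]]]]]]]] := dmsg_head dm.
    move: E'; rewrite E => [[ey]]; subst y' id.
    have [t3 [i3 [s3 [m3 [hin [e4 e5]]]]]] := in_ids hid; subst t3 i3.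
    have [_ [_ o1]] := Iok I (old_in x u w _ e1 hin).
    have [_ [_ o2]] := headok _ _ Eq.
    move: o1; rewrite o2 => [[exy _]]; subst x.
    have := Iuid I y; rewrite e1 eqxx Eq /= ids_cat.
    by rewrite take0 /= hid.
  case/or3P => [hid|hid|hid].
  + by apply: old; rewrite ids_cat mem_cat hid.
  + have [t3 [i3 [s3 [m3 [hin e4]]]]] := in_ids hid; subst id.
    have [e5 _] := hv _ hin; subst t3.
    move=> /ltS_case [->|lt].
      move=> /dmsg_head [y' [t2 [i2 [s2 [m2 [l [E' [Eq [e3 _]]]]]]]]].
      move: E'; rewrite E => [[ey]]; subst y' t2.
      by have [] := headok _ _ Eq; rewrite ltnn.
    by move=> /(Ihm I lt) /=; rewrite ltnNge (ltnW lt).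
  + by apply: old; rewrite ids_cat mem_cat hid orbT.
- move=> x k t1; have [u [v [w [e1 e2 hv uv ur]]]] := step_struct x E.
  rewrite -pend_sim in e1; rewrite e2 !rks_cat !mem_cat.
  have old : k \in rks (u ++ w) -> t1 < t.+1 -> ~ dresp t1 x k.
    move=> hk /ltS_case [->|lt]; last first.
      by apply: (@Ifrk t I x k t1 _ lt); rewrite e1 !rks_cat !mem_cat -mem_cat -rks_cat hk orbT.
    move=> dr; have [b [l Eq]] := dresp_head dr.
    case: dr => E' _; move: E'; rewrite E => [[ey]]; subst y.
    have := Iurk I x; rewrite e1 eqxx Eq /= take0 /=.
    by rewrite hk.
  case/or3P => [hk|hk|hk].
  + by apply: old; rewrite rks_cat mem_cat hk.
  + have [b hin] := in_rks hk.
    have [xq [yq [_ kn]]] := hv _ hin; subst x.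
    move=> /ltS_case [->|lt] dr.
      have [b' [l Eq]] := dresp_head dr.
      move/negP: kn; apply; apply: (Irk I); apply: rks_in; apply: in_Pt; rewrite Eq; left; reflexivity.
    by move/negP: kn; apply; apply: (Ihr I lt dr).
  + by apply: old; rewrite rks_cat mem_cat hk orbT.
- move=> k; rewrite Ek; split.
    move=> /ksu_mem [hk|[yq [b hqo]]].
      by have [t0 [lt h]] := (Iks I k).1 hk; exists t0; split => //; apply: ltnW.
    exists t; split => //; subst y; split => //; exists b; by rewrite /qryr E.
  move=> [t0 [/ltS_case [e|lt] h]].
    subst t0; case: h => E' [b hb]; move: E'; rewrite E => [[ey]]; subst y.
    by apply: (@ksu_new _ _ _ k b erefl); move: hb; rewrite /qryr E.
  by apply: ksu_sub; apply/(Iks I); exists t0.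
- move=> k; have [u [v [w [e1 e2 hv uv ur]]]] := step_struct q E.
  rewrite -pend_sim in e1; rewrite e2 !rks_cat !mem_cat => /or3P [hk|hk|hk].
  + by apply: ksS; apply: (Irk I); rewrite e1 !rks_cat !mem_cat hk orbT.
  + have [b hin] := in_rks hk.
    have [_ [yq [hq _]]] := hv _ hin.
    by rewrite Ek; apply: (@ksu_new _ _ _ k b yq hq).
  + by apply: ksS; apply: (Irk I); rewrite e1 !rks_cat !mem_cat hk !orbT.
- move=> t1 k /ltS_case [->|lt] dr; last by apply: ksS; apply: (Ihr I lt dr).
  have [b' [l Eq]] := dresp_head dr.
  apply: ksS; apply: (Irk I); apply: rks_in; apply: in_Pt; rewrite Eq; left; reflexivity.
- move=> t1 id /ltS_case [->|lt] dm; last by apply: (Ihm I lt dm).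
  have [y' [t2 [i2 [s2 [m2 [l [E' [Eq e3]]]]]]]] := dmsg_head dm.
  move: E'; rewrite E => [[ey]]; subst y' id.
  by have [] := headok _ _ Eq.
Qed.

Lemma InvT t : Inv t.
Proof. elim: t => [|t IH]; [exact: Inv0 | exact: InvS]. Qed.

Definition Q t x := qu (Pt t) x.

Lemma qu_pre t s x : exists e, qu (pre t s) x = qu s x ++ e.
Proof.
rewrite /pre; case: (t == R); last by exists [::]; rewrite cats0.
rewrite /release /=; case: (x == q); [by exists (hd s) | by exists [::]; rewrite cats0].
Qed.

Lemma Q_grow t x : sc t <> Some x -> exists e, Q t.+1 x = Q t x ++ e.
Proof.
move=> ne; rewrite /Q /Pt; have [e ->] := qu_pre t.+1 (sim t.+1) x; exists e; congr (_ ++ _).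
case E: (sc t) => [y|]; last by rewrite (sim_none E).
rewrite (sim_some E) /=; case: eqP => // exy; by case: ne; rewrite E exy.
Qed.

Lemma Q_step t x : sc t = Some x -> exists e, Q t.+1 x = behead (Q t x) ++ e.
Proof.
move=> E; rewrite /Q /Pt; have [e ->] := qu_pre t.+1 (sim t.+1) x.
rewrite (sim_some E) /= eqxx -catA; by eexists.
Qed.

Lemma qu_sim_Q t x it : List.In it (qu (sim t) x) -> List.In it (Q t x).
Proof. by move=> h; rewrite /Q /Pt; have [e ->] := qu_pre t (sim t) x; apply: List.in_or_app; left. Qed.

Lemma grow_upto x t d : (forall j, t <= j -> j < t + d -> sc j <> Some x) ->
  exists e, Q (t + d) x = Q t x ++ e.
Proof.
elim: d => [|d IH] H; first by exists [::]; rewrite addn0 cats0.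
have [e1 e1E] : exists e, Q (t + d) x = Q t x ++ e.
  by apply: IH => j h1 h2; apply: H => //; rewrite addnS ltnS ltnW.
have hn : sc (t + d) <> Some x by apply: H; [exact: leq_addr | by rewrite addnS ltnS].
have [e2 e2E] := Q_grow hn.
by exists (e1 ++ e2); rewrite addnS e2E e1E catA.
Qed.

Lemma next_step x t : (exists t', t <= t' /\ sc t' = Some x) ->
  exists tm, t <= tm /\ sc tm = Some x /\ exists e, Q tm x = Q t x ++ e.
Proof.
move=> [t0 [h0 e0]].
have ex : exists t', (t <= t') && (sc t' == Some x) by exists t0; rewrite h0 e0 eqxx.
case: (ex_minnP ex) => tm /andP [le /eqP Etm] Hmin.
exists tm; split => //; split => //.
rewrite -(subnKC le); apply: grow_upto => j h1; rewrite (subnKC le) => h2 Ej.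
by have := Hmin j; rewrite h1 Ej eqxx /= leqNgt h2 => /(_ isT).
Qed.

Lemma deliver x it : (forall t, exists t', t <= t' /\ sc t' = Some x) ->
  forall N t l1 l2, size l1 = N -> Q t x = l1 ++ it :: l2 ->
  exists t', t <= t' /\ sc t' = Some x /\ exists l, Q t' x = it :: l.
Proof.
move=> fair; elim=> [|N IH] t l1 l2 sz EQ.
all: have [tm [le [Etm [e Ee]]]] := next_step (fair t).
- exists tm; split => //; split => //; case: l1 sz EQ => // _ EQ.
  by exists (l2 ++ e); rewrite Ee EQ.
- case: l1 sz EQ => // a l1 [sz] EQ.
  have [e' Ee'] := Q_step Etm.
  have EQ' : Q tm.+1 x = l1 ++ it :: (l2 ++ e ++ e') by rewrite Ee' Ee EQ /= -!catA.
  have [t' [h1 h2]] := IH tm.+1 l1 (l2 ++ e ++ e') sz EQ'.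
  by exists t'; split => //; apply: leq_trans le (ltnW h1).
Qed.

Lemma deliver_in x it t : (forall t, exists t', t <= t' /\ sc t' = Some x) ->
  List.In it (Q t x) -> exists t', t <= t' /\ sc t' = Some x /\ exists l, Q t' x = it :: l.
Proof.
move=> fair H; have [l1 [l2 EQ]] := List.in_split _ _ H; exact: deliver fair _ _ _ _ erefl EQ.
Qed.

Lemma evr_Q t x : sc t = Some x -> evr t = ev_of (Q t x).
Proof. by move=> E; rewrite /evr E. Qed.
Lemma msrcr_Q t x : sc t = Some x -> msrcr t = src_of (Q t x).
Proof. by move=> E; rewrite /msrcr E. Qed.

Lemma head_in t x it l : Q t x = it :: l -> item_ok t x it.
Proof. by move=> Eq; apply: (Iok (InvT t)); apply: in_Pt; rewrite -/(Q t x) Eq; left. Qed.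

Lemma msg_head t x s m : sc t = Some x -> evr t = EvMsg s m ->
  exists t' i l, Q t x = IMsg t' i s m :: l /\ msrcr t = (t', i).
Proof.
move=> E; rewrite (evr_Q E) (msrcr_Q E).
case: (Q t x) => [|[t' i s' m'|k b] l] //= [-> ->]; by exists t', i, l.
Qed.

Lemma resp_head t x k d : sc t = Some x -> evr t = EvResp _ _ k d ->
  exists l, Q t x = IResp k d :: l.
Proof.
move=> E; rewrite (evr_Q E).
case: (Q t x) => [|[t' i s' m'|k' b] l] //= [-> ->]; by exists l.
Qed.

Lemma sim_adm (F : failure_pattern n) (f : nat)
  (S1 : forall t x, sc t = Some x -> x \notin F t)
  (S2 : forall t x, sc t = Some x -> x = p \/ x = q)
  (S3 : forall x, correct F x -> forall t, exists t', t <= t' /\ sc t' = Some x)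
  (S4 : forall x, correct F x -> x = p \/ x = q)
  (S5 : forall t, sc t = Some p -> correct F q -> t < R)
  (S6 : correct F p -> forall t, sc t <> Some q)
  (S7 : 2 <= n - f) :
  admissible (Consensus n f) F V rr.
Proof.
split; first by [].
split.
  move=> t /=; case E: (sc t) => [x|].
    have -> : post t x (pre t (sim t)) = sim t.+1 by rewrite /= E.
    rewrite (sim_some E) /sentr /qryr /evr E /= -/(Q t x).
    have -> : step x (cf (sim t) x) (ev_of (Q t x)) = stp t x by [].
    case: (stp t x) => [[s' ms] qo] /=; rewrite eqxx; split; first exact: S1 E.
    by split => //; split => // p' /negbTE ->.
  rewrite /sentr /qryr /evr E cf_pre; by split.
split.
  move=> t x s m /= E Ee; have [t' [i [l [EQ ->]]]] := msg_head E Ee.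
  by have [h1 [h2 h3]] := head_in EQ.
split.
  move=> t1 t2 p1 p2 q1 q2 m1 m2 /= E1 Ee1 E2 Ee2 Es.
  have key a b pa pb qa qb ma mb : a < b -> sc a = Some pa -> evr a = EvMsg qa ma ->
      sc b = Some pb -> evr b = EvMsg qb mb -> msrcr a = msrcr b -> False.
    move=> lt Ea Eea Eb Eeb Es'.
    have [t' [i [l [EQ Em]]]] := msg_head Eb Eeb.
    have hid : (t', i) \in ids (pend pb (sim b)).
      apply: (@ids_in _ t' i qb mb); apply: in_Pt; rewrite -/(Q b pb) EQ; left; reflexivity.
    apply: (Ifid (InvT b) hid lt); split; [by exists qa, ma | by rewrite Es' Em].
  case: (ltngtP t1 t2) => // lt; [case: (key _ _ _ _ _ _ _ _ lt E1 Ee1 E2 Ee2 Es)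
                                  | case: (key _ _ _ _ _ _ _ _ lt E2 Ee2 E1 Ee1 (esym Es))].
split.
  move=> t' q0 i p0 m /= E Es cp.
  have fair := S3 _ cp.
  suff [t0 Hin] : exists t0, List.In (IMsg t' i q0 m) (Q t0 p0).
    have [t1 [_ [E1 [l EQ]]]] := deliver_in fair Hin.
    by exists t1; rewrite (evr_Q E1) (msrcr_Q E1) EQ.
  rewrite /sentr E in Es.
  case: (eqVneq p0 q0) => [e|ne].
    subst p0; exists t'.+1; apply: qu_sim_Q; rewrite (sim_some E) /= eqxx.
    apply: List.in_or_app; right; apply: List.in_or_app; left.
    by have := @mk_complete t' 0 q0 (pred1 q0) _ i q0 m Es (eqxx q0); rewrite add0n.
  have [e0|e0] := S4 _ cp; have [e1|e1] := S2 _ _ E; subst p0 q0.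
  - by rewrite eqxx in ne.
  - by case: (S6 cp t').
  - have lt := S5 _ E cp.
    have h1 : List.In (IMsg t' i p m) (hd (sim t'.+1)).
      rewrite (sim_some E) /=; apply: List.in_or_app; right.
      by have := @mk_complete t' 0 p (fun d => (p == p) && (d == q)) _ i q m Es; rewrite add0n eqxx eqxx => /(_ isT).
    have keep : forall d, t'.+1 + d <= R -> List.In (IMsg t' i p m) (hd (sim (t'.+1 + d))).
      elim=> [|d IH] hle; first by rewrite addn0.
      have hj : t'.+1 + d < R by rewrite addnS in hle.
      have hp : pre (t'.+1 + d) (sim (t'.+1 + d)) = sim (t'.+1 + d).
        by rewrite /pre; case: eqP => // e; rewrite e ltnn in hj.
      rewrite addnS; case Ej: (sc (t'.+1 + d)) => [y|].
        rewrite (sim_some Ej) /= /Pt hp; apply: List.in_or_app; left; apply: IH; exact: ltnW.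
      by rewrite (sim_none Ej) /Pt hp; apply: IH; apply: ltnW.
    have := keep (R - t'.+1); rewrite subnKC // => /(_ (leqnn _)) hR.
    exists R; rewrite /Q /Pt /pre eqxx /= eqxx; apply: List.in_or_app; by right.
  - by rewrite eqxx in ne.
split.
  move=> k tau d /= /respr_some [t [fq ->]] V' HV v Hv.
  have := HV q d; rewrite Hv => -> //; exists t; split => //.
split.
  move=> t x k d /= E Ee; have [l EQ] := resp_head E Ee.
  have [xq [tk [lt fq]]] := head_in EQ.
  exists tk.+1, d; split; first exact: respr_spec fq.
  by split => //; subst x; exists tk.
split.
  move=> t1 t2 x k d1 d2 /= E1 Ee1 E2 Ee2.
  have key a b da db : a < b -> sc a = Some x -> evr a = EvResp _ _ k da ->
      sc b = Some x -> evr b = EvResp _ _ k db -> False.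
    move=> lt Ea Eea Eb Eeb; have [l EQ] := resp_head Eb Eeb.
    have hk : k \in rks (pend x (sim b)).
      apply: (@rks_in _ k db); apply: in_Pt; rewrite -/(Q b x) EQ; left; reflexivity.
    by apply: (Ifrk (InvT b) hk lt); split => //; exists da.
  case: (ltngtP t1 t2) => // lt; [case: (key _ _ _ _ lt E1 Ee1 E2 Ee2)
                                  | case: (key _ _ _ _ lt E2 Ee2 E1 Ee1)].
split.
  move=> k Qs hQ Hall.
  have qQ : q \in Qs.
    apply/negPn/negP => nq.
    have sub : Qs \subset [set p].
      apply/subsetP => x xQ; have [t [b [Ex _]]] := Hall x xQ.
      by case: (S2 _ _ Ex) => ex; subst x; [rewrite inE | rewrite xQ in nq].
    have := subset_leq_card sub; rewrite cards1 => h.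
    move: hQ S7 h; rewrite /=; lia.
  have [tq [bq fq]] := Hall q qQ.
  exists tq.+1, bq; split; first exact: respr_spec fq.
  move=> x t b cx fqx; have [Eq [Qq Hq]] := fq.
  case: (S4 _ cx) => ex; subst x; first by case: (S6 cx tq Eq).
  have [et eb] := fq_uniq fqx fq; subst t b.
  have kn : k \notin ks (sim tq).
    apply/negP => /(Iks (InvT tq)) [t0 [lt [E0 [b0 hb0]]]]; exact: Hq t0 lt E0 b0 hb0.
  have Hin : List.In (IResp k bq) (Q tq.+1 q).
    apply: qu_sim_Q; rewrite (sim_some Eq) /= eqxx.
    apply: List.in_or_app; right; apply: List.in_or_app; right.
    have Eq' : sc tq = Some q := Eq.
    have -> : (stp tq q).2 = Some (k, bq) by move: Qq; rewrite /= /qryr Eq'.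
    by rewrite /rsp eqxx (negbTE kn); left.
  have [t1 [_ [E1 [l EQ]]]] := deliver_in (S3 _ cx) Hin.
  by exists t1; rewrite /= (evr_Q E1) EQ.
exact: S3.
Qed.
End Sim.

Section Agree.
Variables (n : nat) (A : algorithm n) (p q : 'I_n).
Hypothesis pq : p != q.

Lemma qu_pre_ne R t (s : sst A) x : x != q -> qu (pre q R t s) x = qu s x.
Proof. by move=> ne; rewrite /pre; case: (t == R) => //=; rewrite (negbTE ne). Qed.

Lemma rsp_ne x qo K : x != q -> rsp A q x qo K = [::].
Proof. by move=> ne; rewrite /rsp (negbTE ne). Qed.

Lemma agree_p T1 R1 R2 V1 V2 (hv : V1 p = V2 p) t : t <= T1 ->
  cf (sim A p q (fun t => if t < T1 then Some p else Some q) R1 V1 t) p =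
  cf (sim A p q (fun _ => Some p) R2 V2 t) p /\
  qu (sim A p q (fun t => if t < T1 then Some p else Some q) R1 V1 t) p =
  qu (sim A p q (fun _ => Some p) R2 V2 t) p.
Proof.
elim: t => [|t IH] lt; first by rewrite /= hv.
have [e1 e2] := IH (ltnW lt).
have E1 : (fun t => if t < T1 then Some p else Some q) t = Some p by rewrite lt.
have E2 : (fun _ : nat => Some p) t = Some p by [].
rewrite (sim_some _ _ _ _ _ E1) (sim_some _ _ _ _ _ E2) /= eqxx.
rewrite /stp /Pt !qu_pre_ne // e1 e2.
by rewrite !rsp_ne.
Qed.

Lemma ksu_ne x qo K : x != q -> ksu q x qo K = K.
Proof. by move=> ne; rewrite /ksu (negbTE ne). Qed.

Lemma pre_notR R t (s : sst A) : t != R -> pre q R t s = s.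
Proof. by rewrite /pre => /negbTE ->. Qed.

Lemma pre_hd0 R t (s : sst A) : hd s = [::] -> qu (pre q R t s) q = qu s q /\ hd (pre q R t s) = [::].
Proof. by move=> h; rewrite /pre; case: (t == R) => //=; rewrite eqxx h cats0. Qed.

Lemma agree_q T1 R1 V1 V2 (hv : V1 q = V2 q) t : t <= R1 ->
  let s1 := sim A p q (fun t => if t < T1 then Some p else Some q) R1 V1 t in
  let s2 := sim A p q (fun t => if t < T1 then None else Some q) 0 V2 t in
  [/\ cf s1 q = cf s2 q, qu s1 q = qu s2 q, ks s1 = ks s2 & hd s2 = [::]].
Proof.
elim: t => [|t IH] lt; first by rewrite /= hv.
have [e1 e2 e3 e4] := IH (ltnW lt).
set sc1 := (fun t => if t < T1 then Some p else Some q).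
set sc2 := (fun t => if t < T1 then None else Some q).
have nR : t != R1 by rewrite neq_ltn lt.
have [h1 h2] := pre_hd0 0 t e4.
cbv zeta.
case: (ltnP t T1) => tT.
  have E1 : sc1 t = Some p by rewrite /sc1 tT.
  have E2 : sc2 t = None by rewrite /sc2 tT.
  rewrite (sim_some _ _ _ _ _ E1) (sim_none _ _ _ _ _ E2) /= eq_sym (negbTE pq) ksu_ne //.
  by rewrite /Pt ?cf_pre ?ks_pre h1 h2 pre_notR // e1 e2 e3.
have E1 : sc1 t = Some q by rewrite /sc1 ltnNge tT.
have E2 : sc2 t = Some q by rewrite /sc2 ltnNge tT.
rewrite (sim_some _ _ _ _ _ E1) (sim_some _ _ _ _ _ E2) /= eqxx.
rewrite /stp /Pt ?cf_pre ?ks_pre h1 h2 pre_notR // e1 e2 e3.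
split => // /=; apply: mk_false' => d; by rewrite eq_sym (negbTE pq).
Qed.
End Agree.

Lemma negative n f : 1 <= f -> f <= n - 2 -> ~ C_reducible (Consensus n (n-1)) (Consensus n f).
Proof.
move=> f1 fn [A H].
have h0 : 0 < n by lia.
have h1 : 1 < n by lia.
pose p : 'I_n := Ordinal h0.
pose q : 'I_n := Ordinal h1.
have pq : p != q by [].
have S7 : 2 <= n - f by lia.
have cardC (x : 'I_n) : #|[set~ x]| <= n - 1 by rewrite cardsC1 card_ord; lia.
pose scP := fun _ : nat => Some p.
pose FP : failure_pattern n := fun _ => [set~ p].
pose VP := fun _ : 'I_n => false.
have corrP x : correct FP x -> x = p.
  move=> cx; apply/eqP; apply/negP => /negP nx; apply: cx; exists 0; by rewrite /FP !inE.
have corrPp : correct FP p by move=> [t]; rewrite /FP !inE eqxx.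
have admP := @sim_adm n A p q scP 0 VP pq FP f.
have isfpP : is_failure_pattern FP by move=> t t' _; apply: subxx.
have atmP : at_most_faulty FP (n - 1) by exists [set~ p]; split => // x [t]; rewrite /FP.
have admP' : admissible (Consensus n f) FP VP (rr A p q scP 0 VP).
  apply: admP.

  - by move=> t x [<-]; rewrite /FP !inE eqxx.
  - by move=> t x [<-]; left.
  - by move=> x /corrP -> t; exists t.
  - by move=> x /corrP ->; left.
  - move=> t _ cq; exfalso; apply: cq; exists 0; by rewrite /FP !inE eq_sym.
  - by move=> _ t; rewrite /scP => -[].
  - exact: S7.
have [termP _ _ validP] := H FP VP _ isfpP atmP admP'.
have [tp [vp Dp]] := termP p corrPp.
have vp0 : vp = false by apply: (validP _ _ _ Dp).
subst vp.
pose scQ := fun t => if t < tp then None else Some q.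
pose FQ : failure_pattern n := fun _ => [set~ q].
pose VQ := fun _ : 'I_n => true.
have corrQ x : correct FQ x -> x = q.
  move=> cx; apply/eqP; apply/negP => /negP nx; apply: cx; exists 0; by rewrite /FQ !inE.
have corrQq : correct FQ q by move=> [t]; rewrite /FQ !inE eqxx.
have admQ := @sim_adm n A p q scQ 0 VQ pq FQ f.
have isfpQ : is_failure_pattern FQ by move=> t t' _; apply: subxx.
have atmQ : at_most_faulty FQ (n - 1) by exists [set~ q]; split => // x [t]; rewrite /FQ.
have scQ_some t x : scQ t = Some x -> x = q by rewrite /scQ; case: (t < tp) => // -[].
have admQ' : admissible (Consensus n f) FQ VQ (rr A p q scQ 0 VQ).
  apply: admQ.
  - by move=> t x /scQ_some ->; rewrite /FQ !inE eqxx.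
  - by move=> t x /scQ_some ->; right.
  - move=> x /corrQ -> t; exists (maxn t tp); split; first exact: leq_maxl.
    by rewrite /scQ ltnNge leq_maxr.
  - by move=> x /corrQ ->; right.
  - by move=> t /scQ_some e; move: pq; rewrite e eqxx.
  - move=> cp; exfalso; apply: cp; exists 0; by rewrite /FQ !inE.
  - exact: S7.
have [termQ _ _ validQ] := H FQ VQ _ isfpQ atmQ admQ'.
have [tq [vq Dq]] := termQ q corrQq.
have vq1 : vq = true by apply: (validQ _ _ _ Dq).
subst vq.
pose R1 := maxn tp tq.
pose scC := fun t => if t < tp then Some p else Some q.
pose FC : failure_pattern n := fun t => if t < tp then [set~ p] :&: [set~ q] else [set~ q].
pose VC := fun x : 'I_n => x != p.
have corrC x : correct FC x -> x = q.
  move=> cx; apply/eqP; apply/negP => /negP nx; apply: cx; exists tp; by rewrite /FC ltnn !inE.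
have corrCp : ~ correct FC p by apply; exists tp; rewrite /FC ltnn !inE.
have admC := @sim_adm n A p q scC R1 VC pq FC f.
have isfpC : is_failure_pattern FC.
  move=> t t' le; rewrite /FC; case: ifP => h; case: ifP => h' //.
  - by apply: subsetIr.
  - by move: h; rewrite (leq_ltn_trans le h').
have atmC : at_most_faulty FC (n - 1).
  exists [set~ q]; split => // x [t]; rewrite /FC; case: ifP => // _; by rewrite inE => /andP [].
have admC' : admissible (Consensus n f) FC VC (rr A p q scC R1 VC).
  apply: admC.
  - move=> t x; rewrite /scC /FC; case: ifP => _ [<-]; by rewrite !inE ?eqxx.
  - by move=> t x; rewrite /scC; case: ifP => _ [<-]; [left|right].
  - move=> x /corrC -> t; exists (maxn t tp); split; first exact: leq_maxl.
    by rewrite /scC ltnNge leq_maxr.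
  - by move=> x /corrC ->; right.
  - move=> t; rewrite /scC; case: ifP => h.
      by move=> _ _; apply: leq_trans h (leq_maxl _ _).
    by move=> -[].
  - by move=> /corrCp.
  - exact: S7.
have [_ _ agreeC _] := H FC VC _ isfpC atmC admC'.
have [e1 _] := @agree_p n A p q pq tp R1 0 VC VP erefl tp (leqnn _).
have [e2 _ _ _] := @agree_q n A p q pq tp R1 VC VQ erefl tq (leq_maxr _ _).
have D1 : decision (cfg (rr A p q scC R1 VC) tp p) = Some false by rewrite /= e1.
have D2 : decision (cfg (rr A p q scC R1 VC) tq q) = Some true by rewrite /= e2.
by have := agreeC _ _ _ _ _ _ D1 D2.
Qed.

Theorem mainTheorem15 (n f : nat) :
  1 <= f -> f <= n - 2 ->
  C_reducible (@Consensus n f) (@Consensus n (n - 1)) /\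
  ~ C_reducible (@Consensus n (n - 1)) (@Consensus n f).
Proof. move=> h1 h2; split; [exact: positive | exact: negative]. Qed.
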